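(* Let $\alpha\in\mathbb{Q}(i)\setminus\mathbb{R}$ with $|\alpha|>1$, with minimal primitive polynomial $P_\alpha(X)=a_2X^2+a_1X+a_0$ ($a_0,a_1,a_2\in\mathbb{Z}$ coprime, $a_2>0$, $P_\alpha(\alpha)=0$), $\mathcal{D}=\{0,\ldots,|a_0|-1\}$ and $\Lambda_\alpha=\mathbb{Z}[\alpha]\cap\alpha^{-1}\mathbb{Z}[\alpha^{-1}]$, and assume $\alpha$ has the finiteness property in $\Lambda_\alpha$. For $k\ge0$ let $L_\alpha^k$ be the set of words $d_{k-1}\ldots d_0\in\mathcal{D}^k$ such that $\sum_{j=l}^{k-1}d_j\alpha^{j-l}\in\Lambda_\alpha$ for every $0\le l\le k-1$ (i.e. integer $\alpha$-expansions of length $k$, leading zeros allowed). Then $$\#L_\alpha^k\le\left\lceil\frac{|\mathcal{D}|}{a_2}\right\rceil^k.$$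
   Context: For $x\in\Lambda_\alpha$ there is a unique $d\in\mathcal{D}$ with $(x-d)/\alpha\in\Lambda_\alpha$, and $T_\alpha(x)=(x-d)/\alpha$; $\alpha$ has the finiteness property in $\Lambda_\alpha$ if for every $N\in\Lambda_\alpha$ the orbit under $T_\alpha$ reaches $0$. *)

(* Defs.v *)
From Stdlib Require Import ClassicalEpsilon.
From mathcomp Require Import all_boot all_order all_algebra all_field.
From mathcomp Require Import boolp.
Set Implicit Arguments. Unset Strict Implicit. Unset Printing Implicit Defensive.
Import Order.TTheory GRing.Theory Num.Theory.
Local Open Scope ring_scope.

Definition intpoly_eval (p : {poly int}) (x : algC) : algC :=
  (map_poly (fun z : int => z%:~R) p).[x].

Definition inZpoly (x y : algC) : Prop := exists p : {poly int}, y = intpoly_eval p x.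

Definition Lambda (alpha : algC) (y : algC) : Prop :=
  inZpoly alpha y /\ exists p : {poly int}, y = alpha^-1 * intpoly_eval p alpha^-1.

(* The digit of x : the (unique, for x in Lambda) d in D = {0,..,N-1}
   with (x - d)/alpha in Lambda; chosen by classical choice. *)
Definition digit (alpha : algC) (N : nat) (x : algC) : nat :=
  epsilon (inhabits 0%N)
    (fun d : nat => (d < N)%N /\ Lambda alpha ((x - d%:R) / alpha)).

Definition Tmap (alpha : algC) (N : nat) (x : algC) : algC :=
  (x - (digit alpha N x)%:R) / alpha.

Definition finiteness_property (alpha : algC) (N : nat) : Prop :=
  forall x, Lambda alpha x -> exists n : nat, iter n (Tmap alpha N) x = 0.

(* a word d_{k-1} ... d_0 is stored as the tuple w with tnth w j = d_j *)
Definition in_L (alpha : algC) (N k : nat) (w : k.-tuple 'I_N) : Prop :=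
  forall l : nat, (l < k)%N ->
    Lambda alpha (\sum_(j < k | (l <= j)%N) (tnth w j : nat)%:R * alpha ^+ (j - l)).

Definition L_set (alpha : algC) (N k : nat) : {set k.-tuple 'I_N} :=
  [set w | `[< @in_L alpha N k w >] ].

(* Main.v *)
Require Import Defs.
From Stdlib Require Import ClassicalEpsilon.
From mathcomp Require Import all_boot all_order all_algebra all_field.
From mathcomp Require Import boolp.
From mathcomp Require Import ring lra zify.
Import Order.TTheory GRing.Theory Num.Theory.
Local Open Scope ring_scope.

Lemma ev_sum (q : {poly int}) n x : (size q <= n)%N ->
  intpoly_eval q x = \sum_(i < n) (q`_i)%:~R * x ^+ i.
Proof.
move=> h; rewrite /intpoly_eval (@horner_coef_wide _ n).
  by apply: eq_bigr => i _; rewrite coef_map.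
by apply: leq_trans h; exact: size_poly.
Qed.

Lemma evB (p q : {poly int}) x : intpoly_eval (p - q) x = intpoly_eval p x - intpoly_eval q x.
Proof. by rewrite /intpoly_eval rmorphB /= hornerD hornerN. Qed.

Lemma evM (p q : {poly int}) x : intpoly_eval (p * q) x = intpoly_eval p x * intpoly_eval q x.
Proof. by rewrite /intpoly_eval rmorphM /= hornerM. Qed.

Lemma evD (p q : {poly int}) x : intpoly_eval (p + q) x = intpoly_eval p x + intpoly_eval q x.
Proof. by rewrite /intpoly_eval rmorphD /= hornerD. Qed.

Lemma evC c x : intpoly_eval c%:P x = c%:~R.
Proof. by rewrite /intpoly_eval map_polyC hornerC. Qed.

Lemma evX x : intpoly_eval 'X x = x.
Proof. by rewrite /intpoly_eval map_polyX hornerX. Qed.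

Lemma key (alpha : algC) (a0 a1 a2 z : int) (p : {poly int}) :
  alpha \notin Num.real ->
  gcdz (gcdz a0 a1) a2 = 1 ->
  a2 != 0 ->
  a2%:~R * alpha ^+ 2 + a1%:~R * alpha + a0%:~R = 0 ->
  z%:~R = alpha^-1 * intpoly_eval p alpha^-1 -> (a2 %| z)%Z.
Proof.
move=> nre hg a2nz hpol hz.
have anz : alpha != 0 by apply: contraNneq nre => ->; rewrite rpred0.
set b := alpha^-1 in hz.
have bnre : b \notin Num.real by rewrite /b rpredV.
pose G := Poly [:: a2; a1; a0].
have sG : (size G <= 3)%N by exact: size_Poly.
have G0 : intpoly_eval G b = 0.
  rewrite (@ev_sum _ _ b sG) !big_ord_recr big_ord0 /= !coef_Poly /= add0r expr0 expr1 mulr1.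
  have -> : a2%:~R + a1%:~R * b + a0%:~R * b ^+ 2 =
     (a2%:~R * alpha ^+ 2 + a1%:~R * alpha + a0%:~R) / alpha ^+ 2 :> algC.
    by rewrite /b; field.
  by rewrite hpol mul0r.
have Gnz : G != 0.
  by apply/eqP => /(congr1 (fun q : {poly int} => q`_0)); rewrite coef_Poly coef0 /=; apply/eqP.
pose F := 'X * p - z%:P.
have F0 : intpoly_eval F b = 0 by rewrite evB evM evX evC hz subrr.
pose R := F %% G.
have R0 : intpoly_eval R b = 0.
  have := Pdiv.Idomain.divp_eq F G.
  move/(congr1 (fun q => intpoly_eval q b)).
  rewrite -mul_polyC evM F0 mulr0 evD evM G0 mulr0 add0r => <-. done.
have sR : (size R <= 2)%N.
  have := ltn_modpN0 F Gnz; rewrite -/R => h; rewrite -ltnS; exact: leq_trans h sG.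
have RR : R = 0.
  move: R0; rewrite (@ev_sum _ _ b sR) !big_ord_recr big_ord0 /= add0r expr0 expr1 mulr1.
  have [r1z|r1nz] := eqVneq (R`_1) 0.
    rewrite r1z mul0r addr0 => /eqP; rewrite intr_eq0 => /eqP r0z.
    apply/polyP => i; rewrite coef0; case: i => [//|[//|i]].
    by rewrite nth_default //; apply: leq_trans sR _.
  move=> /eqP; rewrite addr_eq0 => /eqP hb.
  have : b = - (R`_0)%:~R / (R`_1)%:~R.
    by rewrite hb opprK [_ * b]mulrC mulfK // intr_eq0.
  move=> hb'; case/negP: bnre; rewrite hb'.
  by rewrite rpredM ?rpredN ?rpredV // Rreal_int // intr_int.
have dGF : G %| F by rewrite /dvdp -/R RR.
have [r Fr] := dvdpP_int dGF.
have F_0 : F`_0 = - z by rewrite /F coefB coefXM coefC /= sub0r.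
have hzc := zpolyEprim G.
pose zc := zcontents G.
have zcdiv : (zc %| gcdz (gcdz a0 a1) a2)%Z.
  have /polyOverP hc : G \is a polyOver (dvdz zc) by rewrite -dvdz_contents dvdzz.
  have := hc 0%N; have := hc 1%N; have := hc 2%N; rewrite !coef_Poly /=.
  by move=> h2 h1 h0; rewrite !dvdz_gcd h0 h1 h2.
rewrite hg in zcdiv; case/dvdzP: zcdiv => u hu.
have hG0 : a2 = zc * (zprimitive G)`_0.
  have -> : a2 = G`_0 by rewrite coef_Poly.
  by rewrite [in LHS]hzc coefZ.
apply/dvdzP; exists (- (u * r`_0)).
have : F`_0 = (zprimitive G)`_0 * r`_0 by rewrite Fr coef0M.
rewrite F_0 => /eqP; rewrite eqr_oppLR => /eqP ->.
have -> : (zprimitive G)`_0 = u * a2.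
  by rewrite hG0 mulrA -hu mul1r.
ring.
Qed.

Lemma div_bound (d N n : nat) : (d < N)%N -> (0 < n)%N -> (d %/ n < (N + n - 1) %/ n)%N.
Proof.
move=> hd hn.
have -> : (N + n - 1 = (N - 1) + n)%N by lia.
rewrite divnDr // divnn hn addn1 ltnS leq_div2r //; lia.
Qed.

Lemma eq_from_div (a2 : int) (d1 d2 : nat) :
  (0 < a2) -> (a2 %| (d1%:Z - d2%:Z))%Z -> (d1 %/ `|a2| = d2 %/ `|a2|)%N -> d1 = d2.
Proof.
move=> ha /dvdzP [q hq] hdiv.
have ha' : a2 = (`|a2|%N)%:Z by rewrite gtz0_abs.
set n := `|a2|%N in ha' hdiv.
have hn : (0 < n)%N by rewrite /n absz_gt0 gt_eqF.
have e1 := divn_eq d1 n; have e2 := divn_eq d2 n.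
have r1 := ltn_pmod d1 hn; have r2 := ltn_pmod d2 hn.
rewrite ha' in hq.
move: hq e1 e2 r1 r2 hdiv; set s1 := (d1 %/ n)%N; set s2 := (d2 %/ n)%N;
  set m1 := (d1 %% n)%N; set m2 := (d2 %% n)%N => hq e1 e2 r1 r2 hdiv.
rewrite hdiv in e1.
have hm : (m1%:Z - m2%:Z = q * n%:Z)%R.
  rewrite -hq e1 e2 !PoszD; ring.
have [q0|[q1|q2]] : q = 0 \/ 1 <= q \/ q <= -1 by lia.
- rewrite q0 mul0r in hm; rewrite e1 e2; lia.
- have : n%:Z <= q * n%:Z by rewrite ler_pMl //; lia.
  lia.
- have : n%:Z <= (- q) * n%:Z by rewrite ler_pMl //; lia.
  rewrite mulNr; lia.
Qed.

Lemma sum_shift (k l : nat) (F : 'I_k.+1 -> algC) :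
  \sum_(j < k.+1 | (l.+1 <= j)%N) F j = \sum_(j < k | (l <= j)%N) F (lift ord0 j).
Proof.
rewrite big_mkcond big_ord_recl /= add0r [RHS]big_mkcond.
by apply: eq_bigr => j _; rewrite /bump leq0n add1n ltnS.
Qed.

Lemma tnth_beh (N k : nat) (w : (k.+1).-tuple 'I_N) (j : 'I_k) :
  tnth (behead_tuple w) j = tnth w (lift ord0 j).
Proof.
set d := tnth w ord0.
rewrite (tnth_nth d (behead_tuple w)) (tnth_nth d w) /= nth_behead /bump.
by rewrite leq0n add1n.
Qed.

Definition Ssum (alpha : algC) (N k : nat) (t : k.-tuple 'I_N) : algC :=
  \sum_(j < k | (0 <= j)%N) (tnth t j : nat)%:R * alpha ^+ (j - 0).

Lemma in_L_beh alpha N k (w : (k.+1).-tuple 'I_N) :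
  in_L alpha w -> in_L alpha (behead_tuple w).
Proof.
move=> h l hl; have := h l.+1 hl.
rewrite (sum_shift k l (fun j => (tnth w j : nat)%:R * alpha ^+ (j - l.+1))).
congr Lambda; apply: eq_bigr => j _.
by rewrite tnth_beh lift0 subSS.
Qed.

Lemma in_L_head alpha N k (w : (k.+1).-tuple 'I_N) :
  in_L alpha w -> Lambda alpha ((thead w : nat)%:R + alpha * @Ssum alpha N k (behead_tuple w)).
Proof.
move=> h; have := h 0%N isT.
rewrite big_mkcond big_ord_recl /= subn0 expr0 mulr1 /Ssum mulr_sumr.
congr (Lambda _ (_ + _)); apply: eq_bigr => j _.
by rewrite tnth_beh /bump leq0n add1n !subn0 exprS mulrCA.
Qed.

Lemma step (alpha : algC) (a0 a1 a2 : int) (k : nat) :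
  alpha \notin Num.real ->
  gcdz (gcdz a0 a1) a2 = 1 ->
  0 < a2 ->
  a2%:~R * alpha ^+ 2 + a1%:~R * alpha + a0%:~R = 0 ->
  (#|L_set alpha `|a0|%N k.+1| <=
     #|L_set alpha `|a0|%N k| * ((`|a0|%N + `|a2|%N - 1) %/ `|a2|%N))%N.
Proof.
move=> nre hg ha2 hpol.
set N := `|a0|%N; set n := `|a2|%N; set c := ((N + n - 1) %/ n)%N.
have hn : (0 < n)%N by rewrite /n absz_gt0 gt_eqF.
pose f := fun w : (k.+1).-tuple 'I_N =>
  (behead_tuple w, (Ordinal (@div_bound _ _ _ (ltn_ord (thead w)) hn) : 'I_c)).
have inj : {in L_set alpha N k.+1 &, injective f}.
  move=> w1 w2; rewrite !inE => /asboolP h1 /asboolP h2 e.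
  have eb := congr1 fst e; have eo := congr1 (fun x => val x.2) e.
  simpl in eb, eo.
  have L1 := @in_L_head _ _ _ _ h1; have L2 := @in_L_head _ _ _ _ h2.
  rewrite eb in L1.
  case: L1 => _ [p1 hp1]; case: L2 => _ [p2 hp2].
  have hz : (((thead w1 : nat)%:Z - (thead w2 : nat)%:Z)%:~R : algC)
            = alpha^-1 * intpoly_eval (p1 - p2) alpha^-1.
    rewrite evB mulrBr -hp1 -hp2 rmorphB /= -!pmulrn; ring.
  have hd := @key _ _ _ _ _ _ nre hg (lt0r_neq0 ha2) hpol hz.
  have hd' := @eq_from_div _ _ _ ha2 hd eo.
  rewrite (tuple_eta w1) (tuple_eta w2); apply: val_inj => /=.
  by congr (_ :: _); [apply: val_inj | exact: (congr1 val eb)].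
rewrite -(card_in_imset inj).
have sub : f @: L_set alpha N k.+1 \subset setX (L_set alpha N k) [set: 'I_c].
  apply/subsetP => _ /imsetP [w hw ->].
  move: hw; rewrite !inE => /asboolP hw; rewrite andbT; apply/asboolP.
  exact: (@in_L_beh _ _ _ _ hw).
apply: leq_trans (subset_leq_card sub) _.
by rewrite cardsX cardsT card_ord.
Qed.

Theorem mainTheorem7 (alpha : algC) (a0 a1 a2 : int) :
  (exists a b : rat, alpha = ratr a + ratr b * 'i) ->
  alpha \notin Num.real ->
  1 < `|alpha| ->
  gcdz (gcdz a0 a1) a2 = 1 ->
  0 < a2 ->
  a2%:~R * alpha ^+ 2 + a1%:~R * alpha + a0%:~R = 0 ->
  finiteness_property alpha `|a0|%N ->
  forall k : nat,
    (#|L_set alpha `|a0|%N k| <= ((`|a0|%N + `|a2|%N - 1) %/ `|a2|%N) ^ k)%N.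
Proof.
move=> _ nre _ hg ha2 hpol _ k.
elim: k => [|k IH].
  by apply: leq_trans (max_card _) _; rewrite card_tuple.
apply: leq_trans (@step _ _ _ _ k nre hg ha2 hpol) _.
by rewrite expnS [X in (_ <= X)%N]mulnC; exact: leq_mul IH (leqnn _).
Qed.
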